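(* In the algorithm PELEG described in the context, after each phase $m\ge 1$, \[ \max_{x,x'\in\mathcal X_m,\,x\ne x'}\|x-x'\|^2_{(V^m_{N_m})^{-1}}\le\frac{\left((1/2)^{m+1}\right)^2}{8\log(K^2/\delta_m)}. \]
   Context: Arms are a finite set $\mathcal{X}=\{x_1,\dots,x_K\}\subset\mathbb{R}^d$ with $\|x_k\|_2\le1$; rewards of arm $x$ are $\theta^{*T}x$ plus conditionally $1$-subgaussian noise, $\theta^*\in\mathbb R^d$ unknown. $\|x\|_A=\sqrt{x^TAx}$; $C=\lambda_{\min}(\sum_{k=1}^Kx_kx_k^T)$; $\mathcal P_K$ is the probability simplex on $[K]$; $B(0,D)$ the closed Euclidean ball of radius $D$; $\log$ is natural log. Algorithm PELEG (input $\mathcal X,\delta$). Set $m=1$, $\mathcal X_1=\mathcal X$. While $|\mathcal X_m|>1$ (phase $m$): 1. $\delta_m=\delta/m^2$, $r_m=\sqrt{8\log(K^2/\delta_m)}$, $D_m=2(\sqrt2-1)\sqrt{C/(\max_{x,x'\in\mathcal X_m,x\ne x'}\|x-x'\|_2^2\log K)}$, $\epsilon_m=\min\{1, D_m\sqrt C/r_m\}\,(1/2)^{m+1}$. 2. For $x\in\mathcal X_m$, $\mathcal C_m(x)=\{\lambda\in\mathbb R^d:\exists x'\in\mathcal X_m, x'\ne x,\ \lambda^Tx'\ge\lambda^Tx+\epsilon_m\}$; let $\Lambda_m=\bigcup_{x\in\mathcal X_m}\mathcal C_m(x)\cap B(0,D_m)$. 3. Burn-in: play each arm of $\mathcal X$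 once; set $n^k_K=1$ for all $k$, $V^m_K=\sum_{k=1}^Kx_kx_k^T$, $t=K$. Initialize afresh an exponential-weights (Hedge) learner over the $K$ experts $\hat e_1,\dots,\hat e_K$. 4. While $\min_{\lambda\in\Lambda_m}\|\lambda\|^2_{V^m_t}\le r_m^2$: set $t\leftarrow t+1$; get $w_t\in\mathcal P_K$ from the Hedge learner and form $W_t=\sum_kw_t^kx_kx_k^T$; let $\lambda_t\in\mathrm{argmin}_{\lambda\in\Lambda_m}\|\lambda\|^2_{W_t}$; set $U_t^k=(\lambda_t^Tx_k)^2$ and feed the Hedge learner the loss $l_t(w)=-w^TU_t$; play arm $k_t=\mathrm{argmin}_{k} n^k_{t-1}/\sum_{s=1}^t w_s^k$, increment its count, observe the reward $Y_t$, and set $V^m_t=V^m_{t-1}+x_{k_t}x_{k_t}^T$. 5. Set $N_m=t$ (so the phase stops at the first $t\ge K$ with $\min_{\lambda\in\Lambda_m}\|\lambda\|^2_{V^m_t}> r_m^2$), compute $\hat\theta_m=(V^m_{N_m})^{-1}\sum_{s=1}^{N_m}Y_sx_{k_s}$, set $\mathcal X_{m+1}=\mathcal X_m\setminus\{x\in\mathcal X_m:\exists x'\in\mathcal X_m,\ \hat\theta_m^T(x'-x)>2^{-(m+2)}\}$, and $m\leftarrow m+1$. Return $\mathcal X_m$. *)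

(* Defs.v *)
From HB Require Import structures.
From mathcomp Require Import all_boot all_order all_algebra.
From mathcomp Require Import all_classical all_reals all_analysis.
Set Implicit Arguments. Unset Strict Implicit. Unset Printing Implicit Defensive.
Import Order.TTheory GRing.Theory Num.Theory.
Local Open Scope ring_scope.
Local Open Scope classical_set_scope.

Section PELEG.
Variables (R : realType) (d K : nat).

Definition qform (A : 'M[R]_d) (y : 'cV[R]_d) : R := ((y^T *m A *m y) 0 0).
Definition mxnorm (A : 'M[R]_d) (y : 'cV[R]_d) : R := Num.sqrt (qform A y).
Definition norm2 (y : 'cV[R]_d) : R := Num.sqrt (\sum_(i < d) (y i 0) ^+ 2).

Definition lambda_min (A : 'M[R]_d) : R := inf [set a : R | eigenvalue A a].

Variable x : 'I_K -> 'cV[R]_d.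

Definition gram : 'M[R]_d := \sum_(k < K) (x k *m (x k)^T).
Definition Cmin : R := lambda_min gram.

(* design matrix  sum_k n_k x_k x_k^T  for play counts n *)
Definition design (n : 'I_K -> nat) : 'M[R]_d :=
  \sum_(k < K) ((n k)%:R *: (x k *m (x k)^T)).

(* The active set X_m is represented by a set S of indices. *)
Variable S : {set 'I_K}.

Definition pairmax (f : 'cV[R]_d -> R) : R :=
  \big[Num.max/0]_(i in S) \big[Num.max/0]_(j in S | x i != x j) f (x i - x j).

Variables (delta : R) (m : nat).

Definition delta_m : R := delta / (m%:R ^+ 2).
Definition r_m : R := Num.sqrt (8 * ln ((K%:R ^+ 2) / delta_m)).
Definition D_m : R :=
  2 * (Num.sqrt 2 - 1) *
  Num.sqrt (Cmin / (pairmax (fun y => norm2 y ^+ 2) * ln K%:R)).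
Definition eps_m : R := Num.min 1 (D_m * Num.sqrt Cmin / r_m) * (2^-1) ^+ m.+1.

Definition Cset (i : 'I_K) : set 'cV[R]_d :=
  [set lam | exists2 j, j \in S &
     x j != x i /\
     ((lam^T *m x j) 0 0 >= (lam^T *m x i) 0 0 + eps_m)].
Definition Lambda_m : set 'cV[R]_d :=
  (\bigcup_(i in [set i | i \in S]) Cset i) `&` [set lam | norm2 lam <= D_m].

Definition phase_stopped (V : 'M[R]_d) : Prop :=
  ((r_m ^+ 2)%:E < ereal_inf [set (mxnorm V lam ^+ 2)%:E | lam in Lambda_m])%E.

End PELEG.

(* Main.v *)
Require Import Defs.
From HB Require Import structures.
From mathcomp Require Import all_boot all_order all_algebra.
From mathcomp Require Import all_classical all_reals all_analysis.
From mathcomp Require Import complex ring lra.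
Import Order.TTheory GRing.Theory Num.Theory.
Local Open Scope ring_scope.
Local Open Scope sesquilinear_scope.
Set Implicit Arguments. Unset Strict Implicit. Unset Printing Implicit Defensive.

Section Aux.
Variable (R : realType) (d : nat).
Definition sq (z : 'cV[R]_d) : R := (z^T *m z) 0 0.

Lemma sqE z : sq z = \sum_i z i 0 ^+ 2.
Proof. by rewrite /sq !mxE; apply: eq_bigr => i _; rewrite !mxE expr2. Qed.

Lemma sq_ge0 z : 0 <= sq z.
Proof. by rewrite sqE; apply: sumr_ge0 => i _; apply: sqr_ge0. Qed.

Lemma sq_gt0 z : z != 0 -> 0 < sq z.
Proof.
move=> nz; rewrite lt_neqAle sq_ge0 andbT; apply/negP => /eqP H.
move/negP: nz; apply; apply/eqP/matrixP => i j.
rewrite ord1 mxE.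
have /psumr_eq0P := esym (etrans H (sqE z)).
move=> /(_ (fun i _ => sqr_ge0 (z i 0)) i isT) /eqP.
by rewrite sqrf_eq0 => /eqP.
Qed.

Lemma mx11E (A : 'M[R]_(1, d)) (B : 'M[R]_(d, 1)) (C : 'M[R]_(1,1)) :
  (A *m B *m C) 0 0 = (A *m B) 0 0 * C 0 0.
Proof. by rewrite [LHS]mxE big_ord1. Qed.

Lemma trE (a b : 'cV[R]_d) : (a^T *m b) 0 0 = (b^T *m a) 0 0.
Proof. by rewrite !mxE; apply: eq_bigr => i _; rewrite !mxE mulrC. Qed.

Lemma qform_outer (l a : 'cV[R]_d) :
  (l^T *m (a *m a^T) *m l) 0 0 = ((l^T *m a) 0 0) ^+ 2.
Proof.
by rewrite mulmxA -[_ *m l]mulmxA -[(l^T *m a) *m _]/(mulmx _ _) mx11E (trE a) expr2.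
Qed.
End Aux.

Section Design.
Variables (R : realType) (d K : nat) (x : 'I_K -> 'cV[R]_d).

Lemma qform_design n l : qform (design x n) l =
  \sum_k (n k)%:R * ((l^T *m x k) 0 0) ^+ 2.
Proof.
rewrite /qform /design mulmx_sumr mulmx_suml summxE; apply: eq_bigr => k _.
by rewrite -scalemxAr -scalemxAl mxE qform_outer.
Qed.

Lemma gram_design : gram x = design x (fun _ => 1%N).
Proof. by rewrite /gram /design; apply: eq_bigr => k _; rewrite scale1r. Qed.

Lemma design_sym n : (design x n)^T = design x n.
Proof.
rewrite /design; apply/matrixP => i j; rewrite !mxE !summxE.
apply: eq_bigr => k _; rewrite !mxE.
congr (_ * _); by rewrite !big_ord1 !mxE mulrC.
Qed.

Lemma qform_gram_ge0 l : 0 <= qform (gram x) l.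
Proof.
rewrite gram_design qform_design; apply: sumr_ge0 => k _.
by rewrite mul1r sqr_ge0.
Qed.

Lemma qform_gram_le n l : (forall k, (1 <= n k)%N) ->
  qform (gram x) l <= qform (design x n) l.
Proof.
move=> hn; rewrite gram_design !qform_design; apply: ler_sum => k _.
by rewrite mul1r ler_peMl ?sqr_ge0 // ler1n.
Qed.
End Design.

Lemma qformZ (R : realType) d (A : 'M[R]_d) (c : R) (z : 'cV[R]_d) :
  qform A (c *: z) = c ^+ 2 * qform A z.
Proof.
rewrite /qform linearZ /= [(c *: z)^T]linearZ /= -!scalemxAl scalerA -expr2.
by rewrite mxE.
Qed.

Lemma sqZ (R : realType) d (c : R) (z : 'cV[R]_d) : sq (c *: z) = c ^+ 2 * sq z.
Proof.
by rewrite !sqE mulr_sumr; apply: eq_bigr => i _; rewrite mxE exprMn.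
Qed.

Lemma rayleigh (R : realType) d (A : 'M[R]_d) (c : R) : A^T = A ->
  (forall a, eigenvalue A a -> c <= a) ->
  forall z : 'cV[R]_d, c * (z^T *m z) 0 0 <= (z^T *m A *m z) 0 0.
Proof.
move=> Asym Hc z.
pose f := real_complex R.
pose Ac := map_mx f A.
have Areal : Ac \is a mxOver Num.real.
  by apply/mxOverP => i j; rewrite mxE; apply/complex_realP; exists (A i j).
have Asymc : Ac \is symmetricmx.
  apply/is_hermitianmxP; rewrite expr0 scale1r.
  by apply/matrixP => i j; rewrite !mxE -[in LHS]Asym mxE.
have Aherm := realsym_hermsym Asymc Areal.
have /orthomx_spectralP AE := hermitian_normalmx Aherm.
set P := spectralmx Ac in AE; set D := spectral_diag Ac in AE.
have Pu : P \is unitarymx by apply: spectral_unitarymx.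
have Pinv : invmx P = P ^t* by apply: invmx_unitary.
have Punit : P \in unitmx by apply: spectral_unit.
have Dreal := hermitian_spectral_diag_real Aherm.
have HD : forall j, f c <= D 0 j.
  move=> j.
  have Dj : D 0 j \is Num.real by apply: (mxOverP Dreal).
  rewrite -(RRe_real Dj) lecR; apply: Hc.
  rewrite -(eigenvalue_map f) /= (RRe_real Dj).
  apply/eigenvalueP; exists (row j P).
    rewrite -row_mul.
    have -> : P *m Ac = diag_mx D *m P.
      by rewrite {1}AE !mulmxA mulmxV // mul1mx.
    by rewrite row_mul row_diag_mx -scalemxAl -rowE.
  apply/negP => /eqP H0.
  have : row j 1%:M = 0 :> 'rV[R[i]]_d.
    by rewrite -(mulmxV Punit) row_mul H0 mul0mx.
  move/rowP => /(_ j); rewrite !mxE eqxx /= => /eqP; by rewrite oner_eq0.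
pose zc := map_mx f z.
pose w := P *m zc.
have zcR : map_mx Num.conj zc^T = zc^T.
  by apply/matrixP => i j; rewrite !mxE conj_Creal //; apply/complex_realP; eexists.
have E1 : zc^T *m P^t* = map_mx Num.conj w^T.
  by rewrite /w trmx_mul map_mxM zcR.
have E2 : f ((z^T *m A *m z) 0 0) = (map_mx Num.conj w^T *m diag_mx D *m w) 0 0.
  have EE : f ((z^T *m A *m z) 0 0) = map_mx f (z^T *m A *m z) 0 0 by rewrite [RHS]mxE.
  rewrite EE.
  rewrite !map_mxM -map_trmx -/zc.
  by rewrite -/Ac {1}AE Pinv !mulmxA E1.
have E3 : f ((z^T *m z) 0 0) = (map_mx Num.conj w^T *m w) 0 0.
  have EE : f ((z^T *m z) 0 0) = map_mx f (z^T *m z) 0 0 by rewrite [RHS]mxE.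
  rewrite EE.
  rewrite !map_mxM -map_trmx -/zc.
  have EZ : zc^T *m zc = zc^T *m (invmx P *m P) *m zc by rewrite mulVmx // mulmx1.
  by rewrite EZ Pinv !mulmxA E1.
rewrite -lecR rmorphM /= -/f E2 E3 mul_mx_diag !mxE mulr_sumr -subr_ge0 -sumrB.
apply: sumr_ge0 => j _; rewrite !mxE.
set a := (\sum_j0 _)^*; set b := \sum_j0 _.
have -> : a * D 0 j * b - f c * (a * b) = (D 0 j - f c) * (b * a) by ring.
apply: mulr_ge0; first by rewrite subr_ge0.
exact: mul_conjC_ge0.
Qed.

Theorem lemma1 (R : realType) (d K : nat) (x : 'I_K -> 'cV[R]_d)
  (x_inj : injective x)
  (x_norm : forall k, norm2 (x k) <= 1)
  (delta : R) (delta_gt0 : 0 < delta) (delta_lt1 : delta < 1)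
  (m : nat) (m_ge1 : (1 <= m)%N)
  (S : {set 'I_K}) (S_big : (1 < #|S|)%N)
  (n : 'I_K -> nat) (n_ge1 : forall k, (1 <= n k)%N)
  (stop : phase_stopped x S delta m (design x n)) :
  pairmax x S (fun y => qform (invmx (design x n)) y)
    <= ((2^-1) ^+ m.+1) ^+ 2 / (8 * ln ((K%:R ^+ 2) / delta_m delta m)).
Proof.
set V := design x n.
set a : R := (2^-1) ^+ m.+1.
have [i0 [j0 [i0S j0S ne0]]] : exists i j, [/\ i \in S, j \in S & i != j].
  by apply/card_gt1P.
have xne0 : x i0 != x j0 by apply: contra ne0 => /eqP /x_inj ->.
have K2 : (2 <= K)%N.
  by have := max_card (mem S); rewrite card_ord; apply: leq_trans.
set L := 8 * ln ((K%:R ^+ 2) / delta_m delta m).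
have Lpos : 0 < L.
  rewrite /L mulr_gt0 // ln_gt0 // /delta_m invf_div mulrA.
  have m1 : 1 <= (m%:R : R) ^+ 2 by apply: exprn_ege1; rewrite ler1n.
  have K1 : 1 <= (K%:R : R) ^+ 2 by apply: exprn_ege1; rewrite ler1n; apply: leq_trans K2.
  rewrite ltr_pdivlMr // mul1r; apply: (lt_le_trans delta_lt1).
  by have := ler_pM ler01 ler01 K1 m1; rewrite mul1r.
set r := r_m K delta m.
have rE : r ^+ 2 = L by rewrite /r /r_m sqr_sqrtr // ltW.
have r_gt0 : 0 < r by rewrite /r /r_m sqrtr_gt0.
have a_ge0 : 0 <= a by rewrite /a exprn_ge0 // invr_ge0.
have Vsym : V^T = V by apply: design_sym.
have qV_ge0 : forall l, 0 <= qform V l.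
  by move=> l; apply: (le_trans (qform_gram_ge0 x l)); apply: qform_gram_le.
have stopK : forall l, Lambda_m x S delta m l -> L < qform V l.
  move=> l Hl; move: stop; rewrite /phase_stopped -/r rE => H.
  have := ereal_inf_lbound (S := [set (mxnorm V lam ^+ 2)%:E | lam in Lambda_m x S delta m]).
  move=> /(_ (mxnorm V l ^+ 2)%:E) Hle.
  have {Hle} Hle := Hle (ex_intro2 _ _ l Hl erefl).
  have := lt_le_trans H Hle; rewrite lte_fin /mxnorm sqr_sqrtr //.
set C := Cmin x.
set D := D_m x S.
set e := eps_m x S delta m.
have D_ge0 : 0 <= D.
  rewrite /D /D_m mulr_ge0 // mulr_ge0 // subr_ge0 -{1}(sqrtr1 R) ler_sqrt //.
  by rewrite ler1n.
have eE : e = Num.min 1 (D * Num.sqrt C / r) * a by [].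
have mn_ge0 : 0 <= Num.min 1 (D * Num.sqrt C / r).
  rewrite le_min ler01 /=; apply: divr_ge0; last exact: ltW.
  by apply: mulr_ge0 => //; apply: sqrtr_ge0.
have e_ge0 : 0 <= e by rewrite eE mulr_ge0.
have e_le_a : e <= a by rewrite eE ler_piMl // ge_min lexx.
have e_le_D : e <= D * Num.sqrt C / r * a by rewrite eE ler_wpM2r // ge_min lexx orbT.
have lam_in : forall i j (l : 'cV[R]_d), i \in S -> j \in S -> x i != x j ->
    (l^T *m x i) 0 0 >= (l^T *m x j) 0 0 + e -> norm2 l <= D ->
    Lambda_m x S delta m l.
  move=> i j l iS jS nij H1 H2; split => //.
  by exists j => //; exists i => //; split.
have [C_le0 | C_gt0] := lerP C 0.
  exfalso.
  have e0 : e = 0.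
    by rewrite eE ler0_sqrtr // mulr0 mul0r (min_r (@ler01 R)) mul0r.
  have H1 : ((0 : 'cV[R]_d)^T *m x i0) 0 0 >= ((0 : 'cV[R]_d)^T *m x j0) 0 0 + e.
    by rewrite trmx0 !mul0mx mxE e0 addr0.
  have H2 : norm2 (0 : 'cV[R]_d) <= D.
    rewrite /norm2 (eq_bigr (fun _ => 0)) ?big1 ?sqrtr0 // => i _.
    by rewrite mxE expr0n.
  have := stopK 0 (lam_in i0 j0 0 i0S j0S xne0 H1 H2).
  by rewrite /qform mulmx0 mxE ltNge (ltW Lpos).
have Gsym : (gram x)^T = gram x by rewrite gram_design design_sym.
have eig_ge0 : forall b, eigenvalue (gram x) b -> 0 <= b.
  move=> b /eigenvalueP [v vG vnz].
  have znz : v^T != 0 by apply: contra vnz => /eqP H; rewrite -[v]trmxK H trmx0.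
  have := qform_gram_ge0 x v^T.
  rewrite /qform trmxK vG -scalemxAl mxE.
  have := sq_gt0 znz; rewrite /sq trmxK => P.
  by rewrite pmulr_lge0.
have HC : forall b, eigenvalue (gram x) b -> C <= b.
  move=> b Hb; rewrite /C /Cmin /lambda_min.
  apply: (ge_inf (E := [set b | eigenvalue (gram x) b])) => //.
  by exists 0 => c Hc; apply: eig_ge0.
have HV : forall z, C * sq z <= qform V z.
  move=> z; apply: le_trans (rayleigh Gsym HC z) _; exact: qform_gram_le.
have Vunit : V \in unitmx.
  apply/negPn/negP => nU.
  have Kn0 : kermx V != 0 by rewrite kermx_eq0 row_free_unit.
  case: (pickP (fun i => row i (kermx V) != 0)) => [i Hi | H0]; last first.
    move/negP: Kn0; apply; apply/eqP/row_matrixP => i; rewrite row0.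
    by move: (H0 i) => /negbFE /eqP.
  set v := row i (kermx V) in Hi.
  have vV : v *m V = 0 by rewrite /v -row_mul mulmx_ker row0.
  have znz : v^T != 0 by apply: contra Hi => /eqP H; rewrite -[v]trmxK H trmx0.
  have := HV v^T; rewrite /qform trmxK vV mul0mx mxE.
  by rewrite leNgt pmulr_rgt0 // sq_gt0.
have Vi_sym : (invmx V)^T = invmx V by rewrite trmx_inv Vsym.
have B_ge0 : 0 <= a ^+ 2 / L by rewrite divr_ge0 ?sqr_ge0 // ltW.
have sC2 : Num.sqrt C ^+ 2 = C by rewrite sqr_sqrtr // ltW.
have core : forall i j, i \in S -> j \in S -> x i != x j ->
    qform (invmx V) (x i - x j) <= a ^+ 2 / L.
  move=> i j iS jS nij; set y := x i - x j; set q := qform (invmx V) y.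
  rewrite leNgt; apply/negP => Hq.
  have q_gt0 : 0 < q := le_lt_trans B_ge0 Hq.
  set u := invmx V *m y.
  have uy : (u^T *m y) 0 0 = q by rewrite /u trmx_mul Vi_sym.
  have qVu : qform V u = q.
    by rewrite /qform /u trmx_mul Vi_sym -mulmxA mulKVmx.
  have Cu : C * sq u <= q by rewrite -qVu HV.
  set g := e / q.
  set lam := g *: u.
  have lamv : forall v : 'cV[R]_d, (lam^T *m v) 0 0 = g * (u^T *m v) 0 0.
    by move=> v; rewrite trE -scalemxAr mxE trE.
  have H1 : (lam^T *m x i) 0 0 >= (lam^T *m x j) 0 0 + e.
    have E1 : (lam^T *m y) 0 0 = e by rewrite lamv uy /g divfK // gt_eqF.
    have E2 : (lam^T *m y) 0 0 = (lam^T *m x i) 0 0 - (lam^T *m x j) 0 0.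
      by rewrite /y mulmxBr !mxE.
    by rewrite -E1 E2 addrC subrK.
  have H2 : norm2 lam <= D.
    rewrite /norm2 -sqE -(ger0_norm D_ge0) -sqrtr_sqr ler_sqrt ?sqr_ge0 //.
    rewrite /lam sqZ.
    have eR : e * r <= D * Num.sqrt C * a.
      by have := e_le_D; rewrite mulrAC ler_pdivlMr.
    have er0 : 0 <= e * r by rewrite mulr_ge0 // ltW.
    have f2 : e ^+ 2 * L <= D ^+ 2 * C * a ^+ 2.
      rewrite -rE -sC2.
      have : (e * r) ^+ 2 <= (D * Num.sqrt C * a) ^+ 2.
        have X0 := le_trans er0 eR.
        by rewrite ler_sqr.
      by rewrite !exprMn.
    have f3 : a ^+ 2 < q * L by rewrite -ltr_pdivrMr.
    have DC0 : 0 <= D ^+ 2 * C by rewrite mulr_ge0 ?sqr_ge0 // ltW.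
    have f4 : e ^+ 2 <= D ^+ 2 * C * q.
      have : e ^+ 2 * L <= D ^+ 2 * C * q * L.
        apply: (le_trans f2); have := ler_wpM2l DC0 (ltW f3); by rewrite (mulrA (D ^+ 2 * C) q L).
      by rewrite ler_pM2r.
    have s0 := sq_ge0 u.
    rewrite /g expr_div_n mulrAC ler_pdivrMr ?exprn_gt0 //.
    nra.
  have := stopK lam (lam_in i j lam iS jS nij H1 H2).
  rewrite /lam qformZ qVu => H.
  have gq : g ^+ 2 * q * q = e ^+ 2.
    by rewrite /g; field; rewrite gt_eqF.
  have ea : e ^+ 2 <= a ^+ 2 by rewrite ler_sqr.
  have f3 : a ^+ 2 < q * L by rewrite -ltr_pdivrMr.
  nra.
rewrite /pairmax; elim/big_ind: _ => // [u v hu hv | i iS]; first by rewrite ge_max hu hv.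
elim/big_ind: _ => // [u v hu hv | j /andP [jS nij]]; first by rewrite ge_max hu hv.
exact: core.
Qed.
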